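(* Let $\kappa$ be the critical scale and $S=S_\kappa$ the output of algorithm StochKnap (any parameter $C>0$). If $\mathcal A$ is any adaptive policy that selects items only from $N\setminus S$ and has cost at most $B$, then $\Pr[R(\mathcal A)<\kappa]\ge1-\epsilon$. In particular, for every adaptive policy on $N$ of cost at most $B$ selecting the random set $O$, $\Pr[R(O\setminus S)\ge\kappa]\le\epsilon$.
   Context: Algorithm StochKnap$(N,c,R,B,\epsilon)$ with parameter $C>0$: $N$ is a finite set of items, item $i$ has cost $c(i)>0$ and a nonnegative random reward $R(i)$, rewards independent; $W\ge1$ is an integer with $\sum_{i\in N}\mathbb E[R(i)]\le W$; $B>0$, $\epsilon\in(0,1)$. Let $T=\{i\in N: c(i)\le B\}$ and $D=CB$. For $\tau>0$ let $r_\tau(i)=\mathbb E[\min\{R(i)/\tau,1\}]$. Order $T$ as $i_1,i_2,\ldots$ with $r_\tau(i_j)/c(i_j)$ nonincreasing. If $c(T)\ge D$, let $t$ be the smallest index with $\sum_{j\le t}c(i_j)\ge D$, set $S_\tau=\{i_1,\ldots,i_t\}$ and slope $s_\tau=r_\tau(i_t)/c(i_t)$; otherwise $S_\tau=T$, $s_\tau=0$. Scale $\tau$ is rich if $s_\tau>\epsilon/B$, poor otherwise. Scales $\mathcal G=\{2^\ell:\ell\in\mathbb Z,0\le\ell\le\lceil\log_2W\rceil\}$; critical scale $\kappa$ = smallest poor scale in $\mathcal G$ (assumed to exist); output $S=S_\kappa$. For a set $I$, $R(I)=\sum_{i\in I}R(i)$. An adaptive policy sequentially selects distinct items, each choice possibly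 depending on previously observed rewards and internal randomness independent of unselected rewards; cost at most $B$ means the selected items always have total cost at most $B$; $R(\mathcal A)$ is the total reward of selected items. *)

(* Defs.v *)
From HB Require Import structures.
From mathcomp Require Import all_boot all_order all_algebra.
From mathcomp Require Import all_classical all_reals all_analysis.
Set Implicit Arguments. Unset Strict Implicit. Unset Printing Implicit Defensive.
Import Order.TTheory GRing.Theory Num.Theory.
Local Open Scope classical_set_scope.
Local Open Scope ring_scope.

Section StochKnap.
Variables (R : realType) (I : finType).

Definition costs (c : I -> R) (s : seq I) : R := \sum_(i <- s) c i.

Definition small_items (c : I -> R) (B : R) : seq I :=
  [seq i <- enum I | c i <= B].

(* r_tau(i) = E[min(R(i)/tau, 1)]  (finite since the integrand is in [0,1]) *)
Definition trunc_mean d (Om : measurableType d) (P : probability Om R)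
  (X : I -> Om -> R) (tau : R) (i : I) : R :=
  fine (\int[P]_w (Num.min (X i w / tau) 1)%:E)%E.

(* 0-based index t such that the prefix of length t+1 is the shortest one of
   cost >= D *)
Definition cut_idx (c : I -> R) (D : R) (s : seq I) : nat :=
  find (fun k => D <= costs c (take k.+1 s)) (iota 0 (size s)).

Definition S_of (c : I -> R) (D : R) (s : seq I) : seq I :=
  if D <= costs c s then take (cut_idx c D s).+1 s else s.

Definition slope_of (c : I -> R) (r : I -> R) (D : R) (s : seq I) : R :=
  if D <= costs c s then
    match drop (cut_idx c D s) s with i :: _ => r i / c i | [::] => 0 end
  else 0.

Definition valid_order (c : I -> R) (r : I -> R) (B : R) (s : seq I) : Prop :=
  perm_eq s (small_items c B) /\ sorted (fun i j => r j / c j <= r i / c i) s.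

(* a policy: at step t it selects item Some i or nothing (None) *)
Definition observed d (Om : measurableType d) (X : I -> Om -> R)
  (sel : nat -> Om -> option I) (t : nat) (w : Om) : R :=
  match sel t w with Some i => X i w | None => 0 end.

(* information available before step t: internal randomness G together with
   the choices and observed rewards of steps s < t *)
Definition info d (Om : measurableType d) (G : set (set Om)) (X : I -> Om -> R)
  (sel : nat -> Om -> option I) (t : nat) : set (set Om) :=
  <<s [set A | G A
        \/ (exists s o, (s < t)%N /\ A = sel s @^-1` [set o])
        \/ (exists s (Bm : set R), (s < t)%N /\ measurable Bm /\
              A = observed X sel s @^-1` Bm)] >>.

Definition selected d (Om : measurableType d) (sel : nat -> Om -> option I)
  (w : Om) : {set I} :=
  finset (fun i : I => `[< exists t, sel t w = Some i >]).

Definition adaptive_policy d (Om : measurableType d) (G : set (set Om))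
  (X : I -> Om -> R) (c : I -> R) (B : R) (sel : nat -> Om -> option I) : Prop :=
  (forall t i, info G X sel t (sel t @^-1` [set Some i]))
  /\ (forall s t w i, sel s w = Some i -> sel t w = Some i -> s = t)
  /\ (forall w, \sum_(i in selected sel w) c i <= B).

Definition mutually_independent d (Om : measurableType d) (P : probability Om R)
  (X : I -> Om -> R) : Prop :=
  forall Bs : I -> set R, (forall i, measurable (Bs i)) ->
    P (\bigcap_(i in [set: I]) (X i @^-1` Bs i)) =
    (\prod_(i in [set: I]) P (X i @^-1` Bs i))%E.

Definition indep_of_rewards d (Om : measurableType d) (P : probability Om R)
  (G : set (set Om)) (X : I -> Om -> R) : Prop :=
  forall A, G A -> forall Bs : I -> set R, (forall i, measurable (Bs i)) ->
    P (A `&` \bigcap_(i in [set: I]) (X i @^-1` Bs i)) =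
    (P A * P (\bigcap_(i in [set: I]) (X i @^-1` Bs i)))%E.

End StochKnap.

(* Main.v *)
Require Import Defs.
From HB Require Import structures.
From mathcomp Require Import all_boot all_order all_algebra.
From mathcomp Require Import all_classical all_reals all_analysis.
From mathcomp Require Import measurable_realfun.
From mathcomp Require Import ring lra.
Import Order.TTheory GRing.Theory Num.Theory.
Local Open Scope classical_set_scope.
Local Open Scope ring_scope.
Set Implicit Arguments. Unset Strict Implicit.
Section SA.
Variable T : Type.
Implicit Types (K : set (set T)) (A B E : set T).

Lemma saT K : sigma_algebra setT K -> K setT.
Proof. by case=> K0 KC _; rewrite -(setD0 setT); apply: KC. Qed.

Lemma saC K A : sigma_algebra setT K -> K A -> K (~` A).
Proof. by case=> _ KC _ KA; rewrite -setTD; apply: KC. Qed.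

Lemma saU K A B : sigma_algebra setT K -> K A -> K B -> K (A `|` B).
Proof.
case=> K0 _ KU KA KB; rewrite -bigcup2E; apply: KU => -[|[|n]] //=.
Qed.

Lemma saI K A B : sigma_algebra setT K -> K A -> K B -> K (A `&` B).
Proof.
move=> sK KA KB; rewrite -[A `&` B]setCK setCI.
by apply: saC => //; apply: saU => //; apply: saC.
Qed.

Lemma saEx (J : eqType) K (F : J -> set T) (s : seq J) : sigma_algebra setT K ->
  (forall j, K (F j)) -> K [set w | exists j, j \in s /\ F j w].
Proof.
move=> sK KF; elim: s => [|j s IH].
  rewrite (_ : [set w | _] = set0); first by case: sK.
  by apply/seteqP; split=> w //= [j []].
rewrite (_ : [set w | _] = F j `|` [set w | exists j, j \in s /\ F j w]).
  exact: saU.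
apply/seteqP; split=> w /=.
  by move=> [k []]; rewrite in_cons => /orP[/eqP->|ks] Fk; [left|right; exists k].
by move=> [Fj|[k [ks Fk]]]; [exists j; rewrite mem_head|exists k; rewrite in_cons ks orbT].
Qed.

Definition Tr K E := [set A | exists A', K A' /\ forall w, E w -> (A w <-> A' w)].

Lemma Tr_sa K E : sigma_algebra setT K -> sigma_algebra setT (Tr K E).
Proof.
move=> sK; split.
- by exists set0; split; [case: sK|].
- move=> A [A' [KA' h]]; exists (setT `\` A'); split; first by case: sK => _ + _; apply.
  by move=> w Ew /=; have := h w Ew; tauto.
- move=> F hF; have [G hG] := choice hF.
  exists (\bigcup_k G k); split; first by case: sK => _ _; apply=> n; case: (hG n).
  move=> w Ew; split=> -[k _ Fk]; exists k => //; have [_ h] := hG k; by apply/(h w Ew).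
Qed.

Lemma Tr_in K E A : K A -> Tr K E A.
Proof. by move=> KA; exists A; split. Qed.

Lemma Tr_sub K E E' A : E' `<=` E -> Tr K E A -> Tr K E' A.
Proof. by move=> sE [A' [KA' h]]; exists A'; split=> // w /sE; apply: h. Qed.

End SA.
Unset Implicit Arguments.
Section F1.
Variables (R : realType) (I : finType) (d : measure_display) (Om : measurableType d).
Variables (X : I -> Om -> R) (G : set (set Om)) (sel : nat -> Om -> option I) (i : I).
Variable H : set (set Om).
Hypothesis sH : sigma_algebra setT H.
Hypothesis GH : G `<=` H.
Hypothesis XH : forall j (Bm : set R), j != i -> measurable Bm -> H (X j @^-1` Bm).
Hypothesis hsel : forall t j, info G X sel t (sel t @^-1` [set Some j]).
Hypothesis hnr : forall s t w j, sel s w = Some j -> sel t w = Some j -> s = t.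

Let Et t := [set w | forall s, (s < t)%N -> sel s w <> Some i].
Let Claim t := H (Et t) /\ (forall A, info G X sel t A -> Tr H (Et t) A).

Let Et_sub s t : (s <= t)%N -> Et t `<=` Et s.
Proof. by move=> st w h u us; apply: h; exact: leq_trans us st. Qed.

Lemma claim_step t : (forall s, (s < t)%N -> Claim s) -> Claim t.
Proof.
move=> IH.
have HE : H (Et t).
  case: t IH => [|t] IH.
    rewrite (_ : Et 0 = setT); first exact: saT.
    by apply/seteqP; split=> w //= _ s.
  have [_ /(_ _ (hsel t i)) [A' [HA' hA']]] := IH t (ltnSn t).
  rewrite (_ : Et t.+1 = Et t `&` ~` A'); first by apply: saI => //; [case: (IH t (ltnSn t))|apply: saC].
  apply/seteqP; split=> w /=.
    move=> h; have Etw : Et t w by move=> s st; apply: h; exact: ltnW.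
    split => // /(hA' w Etw); exact: h.
  move=> [Etw nA] s; rewrite ltnS leq_eqVlt => /orP[/eqP->|st].
    by move=> sw; apply: nA; apply/(hA' w Etw).
  exact: Etw.
split => //.
have sT := Tr_sa (Et t) sH.
have selT s j : (s < t)%N -> Tr H (Et t) (sel s @^-1` [set Some j]).
  move=> st; have [_ /(_ _ (hsel s j))] := IH s st.
  by apply: Tr_sub; apply: Et_sub; exact: ltnW.
have selN s : (s < t)%N -> Tr H (Et t) (sel s @^-1` [set None]).
  move=> st.
  rewrite (_ : _ @^-1` _ = ~` [set w | exists j, j \in enum I /\ sel s w = Some j]).
    by apply: saC => //; apply: saEx => // j; exact: selT.
  apply/seteqP; split=> w /=.
    by move=> -> [j [_]].
  by case: (sel s w) => // j /(_ (ex_intro _ j (conj (mem_enum _ j) erefl))).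
unfold info; apply: smallest_sub => //.
move=> A; case=> [GA|]; last case.
- exact/Tr_in/GH.
- move=> [u] [ob] [st ->].
  by case: ob => [j|]; [exact: selT|exact: selN].
- move=> [u] [Bm] [st] [mB ->].
  rewrite (_ : _ @^-1` _ = (sel u @^-1` [set None] `&` [set _ | Bm 0]) `|`
      [set w | exists j, j \in enum I /\ (sel u @^-1` [set Some j] `&` X j @^-1` Bm) w]).
    apply: saU => //.
      apply: saI => //; first exact: selN.
      apply: Tr_in; case: (pselect (Bm 0)) => h.
        by rewrite (_ : [set _ | _] = setT); [exact: saT|apply/seteqP; split].
      by rewrite (_ : [set _ | _] = set0); [case: sH|apply/seteqP; split].
    apply: saEx => // j; have [->|ji] := eqVneq j i.
      exists set0; split; first by case: sH.
      move=> w Etw; split=> //= -[si _]; exact: (Etw u st si).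
    by apply: saI => //; [exact: selT|apply: Tr_in; exact: XH].
  apply/seteqP; split=> w; rewrite /observed /=; case E: (sel u w) => [j|].
  + by move=> Bj; right; exists j; rewrite mem_enum.
  + by move=> B0; left.
  + by case=> [[]//|[k [_ [[<-]]]]].
  + by case=> [[]//|[k [_ []]]].
Qed.

Lemma claim_all t : Claim t.
Proof. by elim/ltn_ind: t => t IH; apply: claim_step. Qed.

Lemma selected_in_H : H [set w | i \in selected sel w].
Proof.
rewrite (_ : [set w | _] = \bigcup_t (sel t @^-1` [set Some i] `&` Et t)).
  case: sH => _ _; apply=> t.
  have [HE /(_ _ (hsel t i)) [A' [HA' h]]] := claim_all t.
  rewrite (_ : _ `&` _ = A' `&` Et t); first exact: saI.
  by apply/seteqP; split=> w /= [a b]; split=> //; apply/(h w b).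
apply/seteqP; split=> w /=.
  rewrite /selected inE => /asboolP [t st]; exists t => //; split => //.
  by move=> s ts ss; move: (hnr s t w i ss st) => se; rewrite se ltnn in ts.
by move=> [t _ [st _]]; rewrite /selected inE; apply/asboolP; exists t.
Qed.

End F1.
Section F2.
Local Open Scope ereal_scope.
Variables (R : realType) (I : finType) (d : measure_display) (Om : measurableType d).
Variables (P : probability Om R) (X : I -> Om -> R) (G : set (set Om)) (i : I).
Hypothesis mX : forall j, measurable_fun setT (X j).
Hypothesis mi : mutually_independent P X.
Hypothesis ind : indep_of_rewards P G X.
Hypothesis sG : sigma_algebra setT G.
Hypothesis Gm : G `<=` measurable.

Definition Pi := [set A : set Om | exists A0 (Bs : I -> set R), G A0 /\
  (forall j, measurable (Bs j)) /\ Bs i = setT /\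
  A = A0 `&` \bigcap_(j in [set: I]) X j @^-1` Bs j].

Definition Hi := <<s Pi >>.

Lemma mpre j (Bm : set R) : measurable Bm -> measurable (X j @^-1` Bm).
Proof. by move=> mB; rewrite -[X j @^-1` _]setTI; exact: (mX j). Qed.

Lemma Pi_setI : setI_closed Pi.
Proof.
move=> A1 A2 [A0 [Bs [GA0 [mBs [Bsi ->]]]]] [A0' [Bs' [GA0' [mBs' [Bsi' ->]]]]].
exists (A0 `&` A0'), (fun j => Bs j `&` Bs' j); split; first exact: saI.
split; first by move=> j; apply: measurableI.
split; first by rewrite Bsi Bsi' setTI.
apply/seteqP; split=> w /=.
  by move=> [[a b] [a' b']]; split=> // j _; split; [exact: b|exact: b'].
by move=> [[a a'] b]; split; split=> // j _; case: (b j Logic.I).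
Qed.

Lemma Pi_meas : Pi `<=` measurable.
Proof.
move=> A [A0 [Bs [GA0 [mBs [_ ->]]]]]; apply: measurableI; first exact: Gm.
apply: fin_bigcap_measurable; first exact: finite_finset.
by move=> j _; apply: mpre.
Qed.

Lemma Hi_meas : Hi `<=` measurable.
Proof. apply: smallest_sub; [exact: sigma_algebra_measurable|exact: Pi_meas]. Qed.

Lemma Hi_sa : sigma_algebra setT Hi.
Proof. exact: smallest_sigma_algebra. Qed.

Lemma G_Hi : G `<=` Hi.
Proof.
move=> A GA; apply: sub_sigma_algebra; exists A, (fun=> setT); split=> //.
split=> //; split=> //; apply/seteqP; split=> w /=; first by move=> Aw; split.
by case.
Qed.

Lemma X_Hi j (Bm : set R) : j != i -> measurable Bm -> Hi (X j @^-1` Bm).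
Proof.
move=> ji mB; apply: sub_sigma_algebra.
exists setT, (fun k => if k == j then Bm else setT); split; first exact: saT.
split; first by move=> k; case: ifP.
split; first by rewrite eq_sym (negbTE ji).
apply/seteqP; split=> w /=.
  by move=> Bw; split=> // k _; case: ifP => // /eqP ->.
by move=> [_ /(_ j Logic.I)]; rewrite eqxx.
Qed.

Lemma prodT (F : I -> \bar R) : \prod_(j in [set: I]) F j = \prod_j F j.
Proof. by apply: eq_bigl => j; rewrite in_setT. Qed.

Lemma fmP (A : set Om) : measurable A -> P A = (fine (P A))%:E.
Proof. by move=> mA; rewrite fineK // fin_num_measure. Qed.

Lemma Pi_indep A (Bm : set R) : Pi A -> measurable Bm ->
  P (A `&` X i @^-1` Bm) = P A * P (X i @^-1` Bm).
Proof.
move=> [A0 [Bs [GA0 [mBs [Bsi ->]]]]] mB.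
pose Bs' j := if j == i then Bm else Bs j.
have mBs' j : measurable (Bs' j) by rewrite /Bs'; case: ifP.
have -> : (A0 `&` \bigcap_(j in [set: I]) X j @^-1` Bs j) `&` X i @^-1` Bm =
    A0 `&` \bigcap_(j in [set: I]) X j @^-1` Bs' j.
  apply/seteqP; split=> w /=.
    move=> [[a b] c]; split=> // j _; rewrite /Bs'; case: ifP => [/eqP->//|_].
    exact: b.
  move=> [a b]; split; last by have := b i Logic.I; rewrite /Bs' eqxx.
  split=> // j _; have := b j Logic.I; rewrite /Bs'; case: ifP => [/eqP->|//].
  by rewrite Bsi.
rewrite !ind // !mi // !prodT (bigD1 i) //= [in RHS](bigD1 i) //= /Bs' eqxx Bsi.
rewrite preimage_setT probability_setT mul1e.
rewrite (eq_bigr (fun j => P (X j @^-1` Bs j))); last by move=> j /negbTE ->.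
by rewrite -muleA [X in _ * X]muleC.
Qed.

Lemma Hi_indep A (Bm : set R) : Hi A -> measurable Bm ->
  P (A `&` X i @^-1` Bm) = P A * P (X i @^-1` Bm).
Proof.
move=> HA mB; set E := X i @^-1` Bm.
have mE : measurable E by exact: mpre.
pose L := [set A : set Om | measurable A /\ P (A `&` E) = P A * P E].
suff: Hi `<=` L by move=> /(_ A HA) [].
apply: lambda_system_subset; first exact: Pi_setI.
- apply/dynkin_lambda_system; split.
  + by split=> //; rewrite setTI probability_setT mul1e.
  + move=> B [mB' hB]; split; first exact: measurableC.
    rewrite probability_setC // setIC -setDE.
    transitivity (P E - P (E `&` B)).
      by apply: measureD => //; exact: (le_lt_trans (probability_le1 P mE) (ltry 1)).
    rewrite (setIC E B) hB muleBl ?mul1e //; first exact: fin_num_measure.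
  + move=> F tF hF; have mF n : measurable (F n) by case: (hF n).
    split; first by apply: bigcup_measurable => k _.
    rewrite setI_bigcupl !measure_bigcup //; last 2 first.
    * by move=> k _; apply: measurableI.
    * exact: trivIset_setIr.
    rewrite (fmP _ mE) muleC -nneseriesZl; last by move=> k _; apply: measure_ge0.
    apply: eq_eseriesr => k _.
    case: (hF k) => _ h; rewrite muleC -(fmP _ mE); exact: h.
- by move=> B PB; split; [exact: Pi_meas|exact: Pi_indep].
- by move=> B _ w.
Qed.

End F2.
Section F3.
Local Open Scope ereal_scope.
Variables (R : realType) (I : finType) (d : measure_display) (Om : measurableType d).
Variables (P : probability Om R) (X : I -> Om -> R) (G : set (set Om)) (i : I).
Hypothesis mX : forall j, measurable_fun setT (X j).
Hypothesis mi : mutually_independent P X.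
Hypothesis ind : indep_of_rewards P G X.
Hypothesis sG : sigma_algebra setT G.
Hypothesis Gm : G `<=` measurable.

Lemma F3 A (f : R -> R) : Hi R I d Om X G i A -> measurable_fun setT f -> (forall y, (0 <= f y)%R) ->
  \int[P]_(w in A) (f (X i w))%:E = P A * \int[P]_w (f (X i w))%:E.
Proof.
move=> HA mf f0.
have mg : measurable_fun setT (EFin \o f) by apply/measurable_EFinP.
have g0 y : 0 <= (EFin \o f) y by rewrite lee_fin.
have mA : measurable A by exact: (Hi_meas R I d Om X G i mX Gm).
have mgX : measurable_fun setT (fun w => (f (X i w))%:E).
  by apply/measurable_EFinP; apply: measurableT_comp.
pose Q := mrestr P mA.
transitivity (\int[Q]_(w in A) (f (X i w))%:E).
  apply: eq_measure_integral => S mS SA; rewrite /Q /mrestr.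
  by congr (P _); apply/seteqP; split=> w //= => [Sw|[]//]; split => //; apply: SA.
transitivity (\int[Q]_w (f (X i w))%:E).
  rewrite -(setUv A) ge0_integral_setU //.
  all: try (by move=> w _; rewrite lee_fin).
  all: try (by rewrite /disj_set setICr).
  all: try (exact: measurableC).
  all: try (exact: measurable_funTS).
  rewrite (@null_set_integral _ _ _ Q (~` A)) ?adde0 //.
  - exact: measurableC.
  - exact: measurable_funTS.
  - by rewrite /Q /= /mrestr setICl measure0.
have -> : \int[Q]_w (f (X i w))%:E = \int[pushforward Q (X i)]_y (EFin \o f) y.
  by rewrite ge0_integral_pushforward // preimage_setT.
have PA0 : (0 <= fine (P A))%R by apply: fine_ge0; apply: measure_ge0.
pose k := NngNum PA0.
rewrite (eq_measure_integral (mscale k (pushforward P (X i)))); last first.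
  move=> S mS _; rewrite /Q /= /pushforward /mrestr /mscale /=.
  transitivity (P (A `&` X i @^-1` S)); first by rewrite setIC.
  rewrite (Hi_indep R I d Om P X G i mX mi ind sG Gm A S HA mS).
  by rewrite [in LHS](fmP R d Om P A mA).
rewrite ge0_integral_mscale // ge0_integral_pushforward // preimage_setT.
by rewrite [in RHS](fmP R d Om P A mA).
Qed.

End F3.
Section Real1.
Variable R : realType.

Lemma min_add1 (x y : R) : 0 <= x -> 0 <= y ->
  Num.min (x + y) 1 <= Num.min x 1 + Num.min y 1.
Proof.
move=> x0 y0; rewrite /Order.min.
case: ifP => h1; case: ifP => h2; case: ifP => h3;
  repeat match goal with
  | h : (_ < _) = false |- _ => move/negbT: h; rewrite -leNgt => h
  | h : (_ < _) = true |- _ => move: h => /= h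
  end; lra.
Qed.

Lemma min_sum (J : Type) (s : seq J) (F : J -> R) (k : R) : 0 < k ->
  (forall j, 0 <= F j) ->
  Num.min ((\sum_(j <- s) F j) / k) 1 <= \sum_(j <- s) Num.min (F j / k) 1.
Proof.
move=> k0 F0; elim: s => [|j s IH].
  rewrite !big_nil mul0r /Order.min ltr01 //.
rewrite !big_cons mulrDl; apply: le_trans; first apply: min_add1.
- by apply: divr_ge0 => //; exact: ltW.
- by apply: divr_ge0; [apply: sumr_ge0|exact: ltW].
- by rewrite lerD2l.
Qed.
End Real1.
Section MainBound.
Local Open Scope ereal_scope.
Variables (R : realType) (I : finType) (d : measure_display) (Om : measurableType d).
Variables (P : probability Om R) (X : I -> Om -> R) (G : set (set Om)).
Variables (sel : nat -> Om -> option I) (c : I -> R) (B k : R) (S : {set I}).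
Hypothesis mX : forall j, measurable_fun setT (X j).
Hypothesis X0 : forall j w, (0 <= X j w)%R.
Hypothesis mi : mutually_independent P X.
Hypothesis ind : indep_of_rewards P G X.
Hypothesis sG : sigma_algebra setT G.
Hypothesis Gm : G `<=` measurable.
Hypothesis hsel : forall t j, info G X sel t (sel t @^-1` [set Some j]).
Hypothesis hnr : forall s t w j, sel s w = Some j -> sel t w = Some j -> s = t.
Hypothesis hcost : forall w, (\sum_(j in selected sel w) c j <= B)%R.
Hypothesis c0 : forall j, (0 < c j)%R.
Hypothesis k0 : (0 < k)%R.

Definition Aset j := [set w | j \in selected sel w].

Lemma HA j : Hi R I d Om X G j (Aset j).
Proof.
apply: (selected_in_H R I d Om X G sel j) => //.
- exact: Hi_sa.
- exact: G_Hi.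
- by move=> j' Bm ji mB; apply: X_Hi.
Qed.

Lemma mA j : measurable (Aset j).
Proof. exact: (Hi_meas R I d Om X G j mX Gm (Aset j) (HA j)). Qed.

Lemma int_indic (A : set Om) (h : Om -> R) : measurable A ->
  \int[P]_w (\1_A w * h w)%:E = \int[P]_(w in A) (h w)%:E.
Proof.
move=> mA'; rewrite (integral_mkcond A); apply: eq_integral => w _.
by rewrite /patch indicE; case: (w \in A); rewrite ?mul1r ?mul0r.
Qed.

Lemma inA j w : (w \in Aset j) = (j \in selected sel w).
Proof. by apply/idP/idP => [/set_mem|/mem_set]. Qed.

Lemma sumE (F : I -> Om -> R) w :
  (\sum_(j in selected sel w :\: S) F j w = \sum_(j <- enum (~: S)) \1_(Aset j) w * F j w)%R.
Proof.
rewrite big_enum big_mkcond [RHS]big_mkcond; apply: eq_bigr => j _.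
rewrite indicE inA !inE.
by case: (j \in S); case: (`[< _ >]); rewrite /= ?mul1r ?mul0r.
Qed.

Definition fk (y : R) : R := (Num.min (y / k) 1)%R.

Lemma fk0 y : (0 <= y)%R -> (0 <= fk y)%R.
Proof.
move=> y0; rewrite /fk /Order.min; case: ifP => // _.
by apply: divr_ge0 => //; exact: ltW.
Qed.

Lemma mfk : measurable_fun setT fk.
Proof.
apply: measurable_minr; last exact: measurable_cst.
by apply: measurable_funM => //; exact: measurable_cst.
Qed.

Lemma mEF (g : Om -> R) : measurable_fun setT g -> measurable_fun setT (fun w => (g w)%:E).
Proof. by move=> mg; apply/measurable_EFinP. Qed.

Definition Ev := [set w | (k <= \sum_(j in selected sel w :\: S) X j w)%R].

Lemma msumX : measurable_fun setT (fun w => \sum_(j <- enum (~: S)) \1_(Aset j) w * X j w)%R.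
Proof.
apply: measurable_sum => j; apply: measurable_funM => //.
by apply: measurable_indic; exact: mA.
Qed.

Lemma mEv : measurable Ev.
Proof.
rewrite (_ : Ev = [set: Om] `&` (fun w => (k <= \sum_(j <- enum (~: S)) \1_(Aset j) w * X j w)%R) @^-1` [set true]).
  by apply: (measurable_fun_ler (measurable_cst k) msumX).
apply/seteqP; split=> w; rewrite /Ev /= (sumE X w) //.
by case.
Qed.

Lemma markov_bound :
  P Ev <= \sum_(j <- enum (~: S)) P (Aset j) * \int[P]_w (fk (X j w))%:E.
Proof.
have -> : P Ev = \int[P]_w (\1_Ev w)%:E by rewrite integral_indic ?setIT //; exact: mEv.
apply: (@le_trans _ _ (\int[P]_w (\sum_(j <- enum (~: S)) \1_(Aset j) w * fk (X j w))%:E)).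
  apply: ge0_le_integral => //.
  - apply: mEF; by apply: measurable_indic; exact: mEv.
  - apply: mEF; apply: measurable_sum => j; apply: measurable_funM.
      by apply: measurable_indic; exact: mA.
    by apply: measurableT_comp => //; exact: mfk.
  move=> w _; rewrite lee_fin indicE; case: (boolP (w \in Ev)) => /= wE; last first.
    by apply: sumr_ge0 => j _; apply: mulr_ge0; [rewrite indicE|apply: fk0].
  have := set_mem wE; rewrite /Ev /= sumE => hk.
  apply: (@le_trans _ _ (\sum_(j <- enum (~: S)) fk (\1_(Aset j) w * X j w))%R).
    apply: le_trans (min_sum R _ (enum (~:S)) (fun j => \1_(Aset j) w * X j w)%R k k0 _).
      rewrite /Order.min; case: ifP => // h.
      by move: h; rewrite ltr_pdivrMr // mul1r ltNge hk.
    by move=> j; apply: mulr_ge0; [rewrite indicE|].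
  apply: ler_sum => j _; rewrite indicE; case: (w \in Aset j); rewrite /= ?mul1r ?mul0r //.
  by rewrite /fk mul0r /Order.min ltr01.
rewrite (eq_integral (fun w => \sum_(j <- enum (~:S)) (\1_(Aset j) w * fk (X j w))%:E)); last by move=> w _; rewrite sumEFin.
have h2 : forall j (x : Om), setT x -> 0 <= (\1_(Aset j) x * fk (X j x))%:E.
  by move=> j w _; rewrite lee_fin; apply: mulr_ge0; [rewrite indicE|apply: fk0].
have h1 : forall j, measurable_fun setT (fun x => (\1_(Aset j) x * fk (X j x))%:E).
  move=> j; apply: mEF; apply: measurable_funM.
    by apply: measurable_indic; exact: mA.
  by apply: measurableT_comp => //; exact: mfk.
rewrite ge0_integral_sum //.
rewrite le_eqVlt; apply/orP; left; apply/eqP; apply: eq_bigr => j _.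
rewrite int_indic; last exact: mA.
have E1 (A' : set Om) : \int[P]_(w in A') (fk (X j w))%:E =
    \int[P]_(w in A') (fk (Num.max (X j w) 0%R))%:E.
  by apply: eq_integral => w _; rewrite /Order.max ltNge X0.
rewrite !E1.
apply: (F3 R I d Om P X G j mX mi ind sG Gm (Aset j) (fun y => fk (Num.max y 0%R)) (HA j)).
  apply: measurableT_comp; first exact: mfk.
  by apply: measurable_maxr => //; exact: measurable_cst.
move=> y; apply: fk0; rewrite /Order.max; case: ifP => // /negbT.
by rewrite -leNgt.
Qed.


Lemma cost_bound :
  \sum_(j <- enum (~: S)) (c j)%:E * P (Aset j) <= B%:E.
Proof.
have h2 : forall j (x : Om), setT x -> 0 <= (\1_(Aset j) x * c j)%:E.
  by move=> j w _; rewrite lee_fin; apply: mulr_ge0; [rewrite indicE|exact: ltW].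
have h1 : forall j, measurable_fun setT (fun x => (\1_(Aset j) x * c j)%:E).
  move=> j; apply: mEF; apply: measurable_funM; last exact: measurable_cst.
  by apply: measurable_indic; exact: mA.
have -> : \sum_(j <- enum (~: S)) (c j)%:E * P (Aset j) =
    \sum_(j <- enum (~: S)) \int[P]_w (\1_(Aset j) w * c j)%:E.
  apply: eq_bigr => j _; rewrite int_indic; last exact: mA.
  by rewrite integral_cst //; exact: mA.
rewrite -ge0_integral_sum //.
rewrite (eq_integral (fun w => (\sum_(j <- enum (~:S)) \1_(Aset j) w * c j)%:E)); last first.
  by move=> w _; rewrite sumEFin.
apply: (@le_trans _ _ (\int[P]_w B%:E)).
  apply: ge0_le_integral => //.
  - by move=> w _; rewrite lee_fin; apply: sumr_ge0 => j _; apply: mulr_ge0; [rewrite indicE|exact: ltW].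
  - apply: mEF; apply: measurable_sum => j; apply: measurable_funM; last exact: measurable_cst.
    by apply: measurable_indic; exact: mA.
  move=> w _; rewrite lee_fin -(sumE (fun j _ => c j) w).
  apply: le_trans (hcost w); rewrite [X in (_ <= X)%R](big_setID S) /=.
  by rewrite lerDr; apply: sumr_ge0 => j _; exact: ltW.
rewrite integral_cst //.
rewrite [X in _ * X](_ : _ = 1) ?mule1 //; exact: probability_setT.
Qed.

Lemma Aset0 j : (B < c j)%R -> Aset j = set0.
Proof.
move=> hB; apply/seteqP; split=> w //= hj.
have := hcost w; rewrite (bigD1 j) //= => h.
have : (c j <= B)%R.
  apply: le_trans h; rewrite lerDl; apply: sumr_ge0 => i _; exact: ltW.
by rewrite leNgt hB.
Qed.

End MainBound.
Section Comb.
Variables (R : realType) (I : finType) (c r : I -> R) (B D : R) (s : seq I).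
Hypothesis c0 : forall j, 0 < c j.
Hypothesis r0 : forall j, 0 <= r j.
Hypothesis D0 : 0 < D.
Hypothesis vo : valid_order c r B s.

Lemma slope_ge0 : 0 <= slope_of c r D s.
Proof.
rewrite /slope_of; case: ifP => // _; case: (drop _ s) => // j _.
by apply: divr_ge0 => //; exact: ltW.
Qed.

Lemma slope_bound j : c j <= B -> j \notin S_of c D s -> r j <= slope_of c r D s * c j.
Proof.
case: vo => pe so cB; have js : j \in s.
  by rewrite (perm_mem pe) mem_filter cB mem_enum.
rewrite /S_of /slope_of; case: ifP => hD; last by rewrite js.
set k := cut_idx c D s.
have hk : (k < size s)%N.
  have sz : (0 < size s)%N by case: (s) js.
  rewrite /k /cut_idx.
  have : has (fun k => D <= costs c (take k.+1 s)) (iota 0 (size s)).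
    apply/hasP; exists (size s).-1; first by rewrite mem_iota add0n prednK // leqnn.
    by rewrite prednK // take_size.
  by rewrite has_find size_iota.
rewrite (drop_nth j hk) => jn.
have jd : j \in drop k.+1 s.
  by move: js; rewrite -[s in j \in s](cat_take_drop k.+1) mem_cat (negbTE jn).
have tr : transitive (fun a b => r b / c b <= r a / c a).
  by move=> b a e h1 h2; exact: le_trans h2 h1.
have := drop_sorted k so; rewrite (drop_nth j hk) /= => /(order_path_min tr) /allP /(_ j jd).
by rewrite ler_pdivrMr.
Qed.

End Comb.
Unset Implicit Arguments.
Theorem mainTheorem8 (R : realType) (I : finType)
  (d : measure_display) (Om : measurableType d) (P : probability Om R)
  (c : I -> R) (X : I -> Om -> R) (W : nat) (B eps C : R)
  (ord : R -> seq I) (lk : nat) :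
  (forall i, 0 < c i) ->
  (forall i, measurable_fun setT (X i)) ->
  (forall i w, 0 <= X i w) ->
  mutually_independent P X ->
  (1 <= W)%N ->
  (\sum_(i in [set: I]) \int[P]_w (X i w)%:E <= (W%:R)%:E)%E ->
  0 < B -> 0 < eps < 1 -> 0 < C ->
  (* for every scale tau, ord tau is an ordering of T by nonincreasing r_tau/c *)
  (forall tau, 0 < tau -> valid_order c (trunc_mean P X tau) B (ord tau)) ->
  (* kappa = 2^lk is the smallest poor scale in {2^l : 0 <= l <= ceil(log2 W)} *)
  (lk <= up_log 2 W)%N ->
  slope_of c (trunc_mean P X (2 ^ lk)%:R) (C * B) (ord (2 ^ lk)%:R) <= eps / B ->
  (forall l, (l < lk)%N ->
     eps / B < slope_of c (trunc_mean P X (2 ^ l)%:R) (C * B) (ord (2 ^ l)%:R)) ->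
  let kappa : R := (2 ^ lk)%:R in
  let S : {set I} := finset (fun i : I => i \in S_of c (C * B) (ord kappa)) in
  (forall (G : set (set Om)) (sel : nat -> Om -> option I),
     sigma_algebra setT G -> G `<=` measurable -> indep_of_rewards P G X ->
     adaptive_policy G X c B sel ->
     (forall w, selected sel w \subset ~: S) ->
     ((1 - eps)%:E <= P [set w | (\sum_(i in selected sel w) X i w < kappa)%R])%E)
  /\
  (forall (G : set (set Om)) (sel : nat -> Om -> option I),
     sigma_algebra setT G -> G `<=` measurable -> indep_of_rewards P G X ->
     adaptive_policy G X c B sel ->
     (P [set w | (kappa <= \sum_(i in selected sel w :\: S) X i w)%R] <= eps%:E)%E).
Proof.
move=> c0 mX X0 mi W1 _ B0 /andP[e0 e1] C0 vo _ hslope _ kappa S.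
have k0 : (0 < kappa)%R by rewrite /kappa ltr0n expn_gt0.
pose r := trunc_mean P X kappa.
pose sl := slope_of c r (C * B) (ord kappa).
have vk : valid_order c r B (ord kappa) := vo kappa k0.
have D0 : (0 < C * B)%R by apply: mulr_gt0.
have fkge0 y : (0 <= y)%R -> (0 <= fk R kappa y)%R.
  move=> y0; rewrite /fk /Order.min; case: ifP => // _.
  by apply: divr_ge0 => //; exact: ltW.
have mfkX j : measurable_fun setT (fun w => (fk R kappa (X j w))%:E).
  apply/measurable_EFinP; apply: measurableT_comp => //.
  apply: measurable_minr; last exact: measurable_cst.
  by apply: measurable_funM => //; exact: measurable_cst.
have Ile1 j : (\int[P]_w (fk R kappa (X j w))%:E <= 1)%E.
  apply: (@le_trans _ _ (\int[P]_w (cst 1%:E) w)%E).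
    apply: ge0_le_integral => //.
    - by move=> w _; rewrite lee_fin; apply: fkge0.
    - move=> w _; rewrite lee_fin /fk /Order.min; case: ifP => // h.
      exact: ltW.
  rewrite integral_cst // mul1e.
  by rewrite [X in (X <= _)%E](_ : _ = 1%E) //; exact: probability_setT.
have Ige0 j : (0 <= \int[P]_w (fk R kappa (X j w))%:E)%E.
  by apply: integral_ge0 => w _; rewrite lee_fin; apply: fkge0.
have Ir j : (\int[P]_w (fk R kappa (X j w))%:E)%E = (r j)%:E.
  rewrite /r /trunc_mean fineK //.
  by rewrite ge0_fin_numE; [exact: (le_lt_trans (Ile1 j) (ltry _))|exact: Ige0].
have r0 j : (0 <= r j)%R by rewrite /r /trunc_mean; apply: fine_ge0; exact: (Ige0 j).
have sl0 : (0 <= sl)%R := slope_ge0 R I c r (C * B) (ord kappa) c0 r0.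
have hsl : (sl * B <= eps)%R by rewrite -ler_pdivlMr.
have key : forall (G : set (set Om)) (sel : nat -> Om -> option I),
    sigma_algebra setT G -> G `<=` measurable -> indep_of_rewards P G X ->
    adaptive_policy G X c B sel ->
    (P [set w | (kappa <= \sum_(i in selected sel w :\: S) X i w)%R] <= eps%:E)%E.
  move=> G sel sG Gm ind [hsel [hnr hcost]].
  apply: le_trans (markov_bound R I d Om P X G sel kappa S mX X0 mi ind sG Gm hsel hnr k0) _.
  apply: (@le_trans _ _ (\sum_(j <- enum (~: S)) (sl * c j)%:E * P (Aset I d Om sel j))%E).
    rewrite !big_enum /=; apply: lee_sum => j; rewrite inE => jS; rewrite Ir.
    have [cjB|cjB] := leP (c j) B.
      rewrite muleC; apply: lee_wpmul2r; first exact: measure_ge0.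
      rewrite lee_fin; apply: (slope_bound R I c r B (C * B) (ord kappa) c0 vk j cjB).
      by move: jS; rewrite /S inE.
    rewrite (Aset0 R I d Om sel c B hcost c0 j cjB).
    rewrite [X in (X * _)%E](_ : _ = 0%E); last exact: measure0.
    rewrite mul0e; apply: mule_ge0; last exact: measure_ge0.
    by rewrite lee_fin; apply: mulr_ge0 => //; exact: ltW.
  rewrite (eq_bigr (fun j => sl%:E * ((c j)%:E * P (Aset I d Om sel j))))%E; last first.
    by move=> j _; rewrite EFinM muleA.
  rewrite -ge0_sume_distrr; last first.
    by move=> j _; apply: mule_ge0; [rewrite lee_fin ltW|apply: measure_ge0].
  apply: le_trans (lee_wpmul2l _ (cost_bound R I d Om P X G sel c B S mX sG Gm hsel hnr hcost c0)) _.
    by rewrite lee_fin.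
  by rewrite -EFinM lee_fin.
split; last first.
  by move=> G sel sG Gm ind pol; move: (key G sel sG Gm ind pol).
move=> G sel sG Gm ind pol hsub.
have := key G sel sG Gm ind pol.
case: (pol) => [hsel [hnr hcost]].
have mE := mEv R I d Om X G sel kappa S mX sG Gm hsel hnr.
set E := Ev R I d Om X sel kappa S.
move=> hP.
have eqS w : selected sel w :\: S = selected sel w.
  by rewrite finset.setDE; apply/finset.setIidPl; exact: hsub.
have -> : [set w | (\sum_(i in selected sel w) X i w < kappa)%R] = ~` E.
  apply/seteqP; split=> w; rewrite /E /Ev /= eqS.
  - by move=> h; rewrite leNgt h.
  - by move/negP; rewrite -ltNge.
rewrite probability_setC //.
move: hP; rewrite (fmP R d Om P E mE) !lee_fin => hP.
lra.
Qed.
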